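(* Suppose Assumptions 1–4 hold. Then the social welfare $W(\mathbf{x})$ achieved at any Cournot candidate $\mathbf{x}$ is positive, and the optimal social welfare $\sup_{\mathbf{y}\ge 0}W(\mathbf{y})$ is positive.
   Context: Cournot model: $N$ suppliers, inverse demand $p:[0,\infty)\to[0,\infty)$, supplier $n$ has cost $C_n:[0,\infty)\to[0,\infty)$ and chooses $x_n\ge0$; $X=\sum_n x_n$. $\partial_\pm$ denote right/left derivatives; $C_n'(0)$ is the right derivative at $0$. Assumption 1: each $C_n$ is convex, continuous, nondecreasing on $[0,\infty)$, continuously differentiable on $(0,\infty)$, with $C_n(0)=0$. Assumption 2: $p$ is continuous, nonnegative, nonincreasing, $p(0)>0$; its right derivative at $0$ exists and at every $q>0$ its left and right derivatives exist. Assumption 3: there exists $R>0$ such that $p(R)\le\min_n C_n'(0)$. Assumption 4: $p(0)>\min_n C_n'(0)$. Social welfare of $\mathbf{x}\ge0$: $W(\mathbf{x})=\int_0^X p(q)\,dq-\sum_{n=1}^N C_n(x_n)$. A nonnegative vector $\mathbf{x}$ is a Cournot candidate if for every $n$: $C_n'(x_n)\le p(X)+x_n\,\partial_-p(X)$ whenever $x_n>0$, and $C_n'(x_n)\ge p(X)+x_n\,\partial_+p(X)$. *)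

(* Defs.v *)
From Stdlib Require Import Reals.
Open Scope R_scope.

Fixpoint sumN (N : nat) (f : nat -> R) : R :=
  match N with
  | O => 0
  | S k => sumN k f + f k
  end.

Definition right_deriv (f : R -> R) (x l : R) : Prop :=
  forall eps, 0 < eps -> exists delta, 0 < delta /\
    forall h, 0 < h < delta -> Rabs ((f (x + h) - f x) / h - l) < eps.

Definition left_deriv (f : R -> R) (x l : R) : Prop :=
  forall eps, 0 < eps -> exists delta, 0 < delta /\
    forall h, 0 < h < delta -> Rabs ((f (x - h) - f x) / (- h) - l) < eps.

Definition cont_nonneg (f : R -> R) : Prop :=
  forall x, 0 <= x -> limit1_in f (fun y => 0 <= y) (f x) x.

Definition convex_nonneg (f : R -> R) : Prop :=
  forall a b t, 0 <= a -> 0 <= b -> 0 <= t <= 1 ->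
    f (t * a + (1 - t) * b) <= t * f a + (1 - t) * f b.

Definition nondecr_nonneg (f : R -> R) : Prop :=
  forall a b, 0 <= a -> a <= b -> f a <= f b.

Definition nonincr_nonneg (f : R -> R) : Prop :=
  forall a b, 0 <= a -> a <= b -> f b <= f a.

Definition assumption1 (C dC : R -> R) : Prop :=
  convex_nonneg C /\ cont_nonneg C /\ nondecr_nonneg C /\ C 0 = 0 /\
  (forall x, 0 < x -> derivable_pt_lim C x (dC x)) /\
  (forall x, 0 < x -> continuity_pt dC x) /\
  right_deriv C 0 (dC 0).

Definition assumption2 (p dpm dpp : R -> R) : Prop :=
  cont_nonneg p /\ (forall q, 0 <= q -> 0 <= p q) /\ nonincr_nonneg p /\
  0 < p 0 /\
  (forall q, 0 <= q -> right_deriv p q (dpp q)) /\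
  (forall q, 0 < q -> left_deriv p q (dpm q)).

Definition total (N : nat) (x : nat -> R) : R := sumN N x.

Definition nonneg_vec (N : nat) (x : nat -> R) : Prop :=
  forall n, (n < N)%nat -> 0 <= x n.

Definition welfare_is (N : nat) (p : R -> R) (C : nat -> R -> R)
    (x : nat -> R) (w : R) : Prop :=
  exists pr : Riemann_integrable p 0 (total N x),
    w = RiemannInt pr - sumN N (fun n => C n (x n)).

Definition cournot_candidate (N : nat) (p dpm dpp : R -> R)
    (dC : nat -> R -> R) (x : nat -> R) : Prop :=
  nonneg_vec N x /\
  forall n, (n < N)%nat ->
    (0 < x n -> dC n (x n) <= p (total N x) + x n * dpm (total N x)) /\
    dC n (x n) >= p (total N x) + x n * dpp (total N x).

(* Main.v *)
Require Import Defs.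
From Stdlib Require Import Reals Lra Lia.
From Coquelicot Require Import Coquelicot.
Open Scope R_scope.

Lemma sumN_ext N f g : (forall n, (n < N)%nat -> f n = g n) -> sumN N f = sumN N g.
Proof. induction N; simpl; intros H; auto. rewrite IHN; [rewrite H|intros; apply H]; auto; lia. Qed.

Lemma sumN_minus N f g : sumN N (fun n => f n - g n) = sumN N f - sumN N g.
Proof. induction N; simpl; [lra|rewrite IHN; lra]. Qed.

Lemma sumN_scal N c f : sumN N (fun n => c * f n) = c * sumN N f.
Proof. induction N; simpl; [lra|rewrite IHN; lra]. Qed.

Lemma sumN_le N f g : (forall n, (n < N)%nat -> f n <= g n) -> sumN N f <= sumN N g.
Proof. induction N; simpl; intros H; [lra|]. assert (f N <= g N) by (apply H; lia).
 assert (sumN N f <= sumN N g) by (apply IHN; intros; apply H; lia). lra. Qed.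

Lemma sumN_nonneg N f : (forall n, (n < N)%nat -> 0 <= f n) -> 0 <= sumN N f.
Proof. intros H. replace 0 with (sumN N (fun _ => 0)). apply sumN_le; auto.
 clear H; induction N; simpl; auto; rewrite IHN; lra. Qed.

Lemma sumN_ge_term N f m : (forall n, (n < N)%nat -> 0 <= f n) -> (m < N)%nat -> f m <= sumN N f.
Proof. induction N; intros H Hm; [lia|simpl].
 destruct (Nat.eq_dec m N) as [->|Hne].
 - assert (0 <= sumN N f) by (apply sumN_nonneg; intros; apply H; lia). lra.
 - assert (f m <= sumN N f) by (apply IHN; [intros; apply H|]; lia).
   assert (0 <= f N) by (apply H; lia). lra. Qed.

Lemma sumN_pos N f m : (forall n, (n < N)%nat -> 0 <= f n) -> (m < N)%nat -> 0 < f m -> 0 < sumN N f.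
Proof. intros H Hm Hp. pose proof (sumN_ge_term N f m H Hm). lra. Qed.

Lemma sumN_single N f m : (m < N)%nat -> (forall n, (n < N)%nat -> n <> m -> f n = 0) -> sumN N f = f m.
Proof. induction N; intros Hm H; [lia|simpl].
 destruct (Nat.eq_dec m N) as [->|Hne].
 - assert (Z: forall k, sumN k (fun _ => 0) = 0) by (induction k; simpl; [lra|rewrite IHk; lra]).
   rewrite (sumN_ext N f (fun _ => 0)), Z; [lra|]. intros; apply H; lia.
 - rewrite H by lia. rewrite IHN; [lra|lia|]. intros; apply H; lia. Qed.

Lemma secant_le_deriv C a b D : convex_nonneg C -> 0 <= a < b -> derivable_pt_lim C b D ->
  C b - C a <= (b - a) * D.
Proof.
 intros Hc [Ha Hab] Hd.
 destruct (Rle_lt_dec (C b - C a) ((b-a)*D)) as [ok|Hlt]; auto. exfalso.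
 set (s := (C b - C a)/(b-a)).
 assert (Hs : D < s). { unfold s. apply Rmult_lt_reg_r with (b-a); [lra|].
   field_simplify; lra. }
 destruct (Hd (s - D)) as [del Hdel]; [lra|].
 set (t := Rmin (1/2) (del/(2*(b-a)))).
 assert (Ht0 : 0 < t). { unfold t. apply Rmin_glb_lt; [lra|]. pose proof (cond_pos del).
   apply Rdiv_lt_0_compat; lra. }
 assert (Ht1 : t <= 1/2) by apply Rmin_l.
 assert (Ht2 : t * (b-a) < del). { assert (t <= del/(2*(b-a))) by apply Rmin_r.
   pose proof (cond_pos del). apply Rle_lt_trans with (del/(2*(b-a)) * (b-a)).
   apply Rmult_le_compat_r; lra. field_simplify; lra. }
 set (h := - (t * (b-a))).
 assert (Hh0 : h <> 0) by (unfold h; nra).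
 assert (Hha : Rabs h < del). { unfold h. rewrite Rabs_Ropp, Rabs_pos_eq; nra. }
 specialize (Hdel h Hh0 Hha).
 assert (Hconv := Hc a b t Ha (ltac:(lra)) (ltac:(lra))).
 replace (t*a + (1-t)*b) with (b + h) in Hconv by (unfold h; ring).
 assert (HCs : C b - C a = s * (b-a)) by (unfold s; field; lra).
 assert (Hq : (C (b+h) - C b)/h >= s). {
   unfold h. apply Rle_ge. 
   apply Rmult_le_reg_r with (t*(b-a)); [nra|].
   replace ((C (b + - (t * (b - a))) - C b) / - (t * (b - a)) * (t * (b - a)))
     with (C b - C (b + - (t*(b-a)))) by (field; nra).
   fold h. nra. }
 assert (Habs : (C (b+h) - C b)/h - D <= Rabs ((C (b+h) - C b)/h - D)) by apply Rle_abs.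
 lra.
Qed.

Lemma chord_from0 C y d0 : convex_nonneg C -> C 0 = 0 -> right_deriv C 0 d0 -> 0 < y -> y * d0 <= C y.
Proof.
 intros Hc H0 Hd Hy.
 destruct (Rle_lt_dec (y*d0) (C y)) as [ok|Hlt]; auto. exfalso.
 set (s := C y / y).
 assert (Hs : s < d0). { unfold s. apply Rmult_lt_reg_r with y; [lra|]. field_simplify; lra. }
 destruct (Hd (d0 - s)) as [del [Hdel Hdd]]; [lra|].
 set (h := Rmin y (del/2)).
 assert (Hh0 : 0 < h) by (apply Rmin_glb_lt; lra).
 assert (Hhy : h <= y) by apply Rmin_l.
 assert (Hhd : h <= del/2) by apply Rmin_r.
 specialize (Hdd h (ltac:(lra))).
 assert (Hconv := Hc y 0 (h/y) (ltac:(lra)) (ltac:(lra)) (ltac:(split; [apply Rdiv_le_0_compat; lra| apply Rmult_le_reg_r with y; [lra|]; field_simplify; lra]))).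
 replace (h / y * y + (1 - h / y) * 0) with h in Hconv by (field; lra).
 rewrite H0 in Hconv. replace (h / y * C y + (1 - h / y) * 0) with (h * s) in Hconv by (unfold s; field; lra).
 rewrite Rplus_0_l, H0 in Hdd.
 assert (Hq : (C h - 0)/h <= s). { apply Rmult_le_reg_r with h; [lra|]. field_simplify; lra. }
 assert (Habs : - ((C h - 0)/h - d0) <= Rabs ((C h - 0)/h - d0)) by (rewrite <- Rabs_Ropp; apply Rle_abs).
 lra.
Qed.

Lemma rd0_upper C d0 eps : C 0 = 0 -> right_deriv C 0 d0 -> 0 < eps ->
  exists h0, 0 < h0 /\ forall h, 0 < h < h0 -> C h < h * (d0 + eps).
Proof.
 intros H0 Hd He. destruct (Hd eps He) as [del [Hdel Hdd]]. exists del; split; auto.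
 intros h Hh. specialize (Hdd h Hh). rewrite Rplus_0_l, H0 in Hdd.
 assert (Habs : (C h - 0)/h - d0 <= Rabs ((C h - 0)/h - d0)) by apply Rle_abs.
 assert (Hq: (C h - 0)/h < d0 + eps) by lra.
 apply Rmult_lt_reg_r with (/h). apply Rinv_0_lt_compat; lra.
 replace (C h * / h) with ((C h - 0)/h) by (unfold Rdiv; ring).
 replace (h * (d0 + eps) * / h) with (d0+eps) by (field; lra). lra.
Qed.

Lemma left_deriv_nonpos p X l : nonincr_nonneg p -> 0 < X -> left_deriv p X l -> l <= 0.
Proof.
 intros Hp HX Hd. destruct (Rle_lt_dec l 0) as [ok|Hlt]; auto. exfalso.
 destruct (Hd l Hlt) as [del [Hdel Hdd]].
 set (h := Rmin X (del/2) / 2).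
 assert (Hh0 : 0 < h) by (unfold h; assert (0 < Rmin X (del/2)) by (apply Rmin_glb_lt; lra); lra).
 assert (HhX : h < X) by (unfold h; pose proof (Rmin_l X (del/2)); lra).
 assert (Hhd : h < del) by (unfold h; pose proof (Rmin_r X (del/2)); lra).
 specialize (Hdd h (ltac:(lra))).
 assert (Hm : p X <= p (X - h)) by (apply Hp; lra).
 assert (Hq : (p (X - h) - p X) / - h <= 0).
 { replace ((p (X - h) - p X) / - h) with (- ((p (X - h) - p X) / h)) by (field; lra).
   assert (0 <= (p (X - h) - p X) / h) by (apply Rdiv_le_0_compat; lra). lra. }
 assert (Habs : - ((p (X - h) - p X) / - h - l) <= Rabs ((p (X - h) - p X) / - h - l)) by (rewrite <- Rabs_Ropp; apply Rle_abs).
 lra.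
Qed.

Lemma p_ex_RInt p a b : cont_nonneg p -> 0 <= a <= b -> ex_RInt p a b.
Proof.
 intros Hc Hab.
 set (q := fun y => p (Rmax 0 y)).
 assert (Hq : forall y, continuity_pt q y).
 { intros y eps He. destruct (Hc (Rmax 0 y) (Rmax_l 0 y) eps He) as [alp [Ha Hal]].
   exists alp; split; auto. intros z [_ Hz]. unfold q. apply Hal. split. apply Rmax_l.
   simpl in *. unfold R_dist in *. eapply Rle_lt_trans; [|exact Hz].
   unfold Rmax; destruct (Rle_dec 0 z), (Rle_dec 0 y); unfold Rabs;
   repeat destruct Rcase_abs; lra. }
 apply ex_RInt_ext with q.
 intros x Hx. unfold q. rewrite Rmin_left, Rmax_right in Hx by lra. rewrite Rmax_right by lra. auto.
 apply ex_RInt_Reals_1. apply continuity_implies_RiemannInt; [lra|]. intros; apply Hq.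
Qed.

Lemma p_near0 p eps : cont_nonneg p -> 0 < eps -> exists del, 0 < del /\ forall q, 0 <= q < del -> p 0 - eps < p q.
Proof.
 intros Hc He. destruct (Hc 0 (Rle_refl 0) eps He) as [alp [Ha Hal]].
 exists alp; split; auto. intros q Hq.
 assert (Hd : R_dist q 0 < alp) by (unfold R_dist, Rabs; destruct Rcase_abs; lra).
 assert (H := Hal q (conj (proj1 Hq) Hd)).
 simpl in H. unfold R_dist in H. assert (H' := Rle_abs (- (p q - p 0))). rewrite Rabs_Ropp in H'. lra.
Qed.

Lemma RInt_lower f a b m : a <= b -> ex_RInt f a b -> (forall x, a < x < b -> m <= f x) -> (b - a) * m <= RInt f a b.
Proof.
 intros Hab He Hm. replace ((b-a)*m) with (RInt (fun _ => m) a b).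
 apply RInt_le; auto. apply ex_RInt_const. rewrite RInt_const. reflexivity.
Qed.

Lemma RInt_upper f a b m : a <= b -> ex_RInt f a b -> (forall x, a < x < b -> f x <= m) -> RInt f a b <= (b - a) * m.
Proof.
 intros Hab He Hm. replace ((b-a)*m) with (RInt (fun _ => m) a b).
 apply RInt_le; auto. apply ex_RInt_const. rewrite RInt_const. reflexivity.
Qed.

Theorem proposition5 (N : nat) (p dpm dpp : R -> R) (C dC : nat -> R -> R)
  (A1 : forall n, (n < N)%nat -> assumption1 (C n) (dC n))
  (A2 : assumption2 p dpm dpp)
  (A3 : exists R0, 0 < R0 /\ forall n, (n < N)%nat -> p R0 <= dC n 0)
  (A4 : exists n, (n < N)%nat /\ dC n 0 < p 0) :
  (forall x, cournot_candidate N p dpm dpp dC x ->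
     exists w, welfare_is N p C x w /\ 0 < w) /\
  (exists s, is_lub (fun w => exists y, nonneg_vec N y /\ welfare_is N p C y w) s
             /\ 0 < s).
Proof.
 destruct A2 as [Pc [Pnn [Pni [Pp0 [_ Pdm]]]]].
 destruct A4 as [m [Hm Hdm]].
 split.
 - intros x [Hnn Hcc].
   set (X := total N x).
   assert (HX0 : 0 <= X) by (apply sumN_nonneg; auto).
   assert (HI : ex_RInt p 0 X) by (apply p_ex_RInt; auto; lra).
   set (pr := ex_RInt_Reals_0 p 0 X HI).
   exists (RiemannInt pr - sumN N (fun n => C n (x n))). split; [exists pr; reflexivity|].
   rewrite <- RInt_Reals.
   assert (Hxle : forall n, (n < N)%nat -> x n <= X) by (intros; apply sumN_ge_term; auto).
   assert (Hdle : forall n, (n < N)%nat -> 0 < x n -> dC n (x n) <= p X).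
   { intros n Hn Hx. destruct (Hcc n Hn) as [H1 _]. specialize (H1 Hx).
     assert (dpm X <= 0). { apply (left_deriv_nonpos p X); auto.
       specialize (Hxle n Hn); lra. apply Pdm. specialize (Hxle n Hn); lra. }
     assert (x n * dpm X <= 0) by nra. fold X in H1. lra. }
   assert (HT : forall n, (n < N)%nat -> C n (x n) <= x n * p X).
   { intros n Hn. destruct (A1 n Hn) as [Cv [_ [_ [C0 [Cd _]]]]].
     destruct (Hnn n Hn) as [Hp| He].
     - assert (H := secant_le_deriv (C n) 0 (x n) (dC n (x n)) Cv (ltac:(lra)) (Cd _ Hp)).
       rewrite C0 in H. specialize (Hdle n Hn Hp). nra.
     - rewrite <- He, C0. lra. }
   assert (HsumC : sumN N (fun n => C n (x n)) <= X * p X).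
   { apply Rle_trans with (sumN N (fun n => p X * x n)).
     apply sumN_le. intros n Hn. rewrite Rmult_comm. auto.
     rewrite sumN_scal. fold (total N x). fold X. lra. }
   assert (HpX : p X <= p 0) by (apply Pni; lra).
   destruct (Rle_lt_dec (p 0) (p X)) as [Heq|Hlt].
   +
     assert (Hxm : 0 < x m).
     { destruct (Hnn m Hm) as [ok|He]; auto. exfalso. destruct (Hcc m Hm) as [_ H2].
       rewrite <- He in H2. fold X in H2. lra. }
     destruct (A1 m Hm) as [Cv [_ [_ [C0 [Cd [_ Cr]]]]]].
     destruct (rd0_upper (C m) (dC m 0) (p 0 - dC m 0) C0 Cr) as [h0 [Hh0 Hh]]; [lra|].
     set (h := Rmin (x m) h0 / 2).
     assert (Hmin : 0 < Rmin (x m) h0) by (apply Rmin_glb_lt; lra).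
     assert (Hhx : h < x m) by (unfold h; pose proof (Rmin_l (x m) h0); lra).
     specialize (Hh h (ltac:(unfold h; pose proof (Rmin_r (x m) h0); lra))).
     assert (H := secant_le_deriv (C m) h (x m) (dC m (x m)) Cv (ltac:(assert (0 < h) by (unfold h; lra); lra)) (Cd _ Hxm)).
     specialize (Hdle m Hm Hxm).
     assert (Hstrict : C m (x m) < x m * p X) by nra.
     assert (Hpos : 0 < sumN N (fun n => x n * p X - C n (x n))).
     { apply sumN_pos with m; auto. intros n Hn; specialize (HT n Hn); lra. lra. }
     rewrite sumN_minus in Hpos.
     replace (sumN N (fun n => x n * p X)) with (p X * X) in Hpos
       by (unfold X at 2, total; rewrite <- sumN_scal; apply sumN_ext; intros; ring).
     assert (HR : (X - 0) * p X <= RInt p 0 X).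
     { apply RInt_lower; auto. intros q Hq. apply Pni; lra. }
     lra.
   + assert (HXp : 0 < X). { destruct HX0 as [ok|He]; auto. rewrite <- He in Hlt. lra. }
     destruct (p_near0 p ((p 0 - p X)/2) Pc) as [del [Hdel Hd]]; [lra|].
     set (a := Rmin X (del/2)).
     assert (Ha0 : 0 < a) by (apply Rmin_glb_lt; lra).
     assert (HaX : a <= X) by apply Rmin_l.
     assert (Had : a <= del/2) by apply Rmin_r.
     assert (HI1 : ex_RInt p 0 a) by (apply p_ex_RInt; auto; lra).
     assert (HI2 : ex_RInt p a X) by (apply p_ex_RInt; auto; lra).
     rewrite <- (RInt_Chasles p 0 a X HI1 HI2).
     assert (L1 : (a - 0) * (p 0 - (p 0 - p X)/2) <= RInt p 0 a).
     { apply RInt_lower; auto; [lra|]. intros q Hq. apply Rlt_le, Hd. lra. }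
     assert (L2 : (X - a) * p X <= RInt p a X).
     { apply RInt_lower; auto. intros q Hq. apply Pni; lra. }
     change plus with Rplus. nra.
 - destruct A3 as [R0 [HR0 HR0d]].
   set (E := fun w => exists y, nonneg_vec N y /\ welfare_is N p C y w).
   assert (Hb : forall w, E w -> w <= R0 * p 0).
   { intros w [y [Hy [pr Hw]]]. rewrite Hw, <- RInt_Reals.
     set (Y := total N y).
     assert (HY0 : 0 <= Y) by (apply sumN_nonneg; auto).
     assert (HC : p R0 * Y <= sumN N (fun n => C n (y n))).
     { unfold Y, total. rewrite <- sumN_scal. apply sumN_le. intros n Hn.
       destruct (A1 n Hn) as [Cv [_ [_ [C0 [_ [_ Cr]]]]]].
       specialize (HR0d n Hn).
       destruct (Hy n Hn) as [Hp|He].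
       - pose proof (chord_from0 _ _ _ Cv C0 Cr Hp). nra.
       - rewrite <- He, C0. lra. }
     assert (HpR : 0 <= p R0) by (apply Pnn; lra).
     destruct (Rle_lt_dec Y R0).
     - assert (RInt p 0 Y <= (Y - 0) * p 0).
       { apply RInt_upper; [lra| apply p_ex_RInt; auto; lra|]. intros q Hq; apply Pni; lra. }
       nra.
     - assert (HI1 : ex_RInt p 0 R0) by (apply p_ex_RInt; auto; lra).
       assert (HI2 : ex_RInt p R0 Y) by (apply p_ex_RInt; auto; lra).
       rewrite <- (RInt_Chasles p 0 R0 Y HI1 HI2). change plus with Rplus.
       assert (RInt p 0 R0 <= (R0 - 0) * p 0).
       { apply RInt_upper; auto; [lra|]. intros q Hq; apply Pni; lra. }
       assert (RInt p R0 Y <= (Y - R0) * p R0).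
       { apply RInt_upper; auto; [lra|]. intros q Hq; apply Pni; lra. }
       nra. }
   destruct (A1 m Hm) as [Cv [_ [_ [C0 [_ [_ Cr]]]]]].
   set (eps := (p 0 - dC m 0)/3).
   destruct (rd0_upper (C m) (dC m 0) eps C0 Cr) as [h0 [Hh0 Hh]]; [unfold eps; lra|].
   destruct (p_near0 p eps Pc) as [del [Hdel Hd]]; [unfold eps; lra|].
   set (h := Rmin h0 del / 2).
   assert (Hmin : 0 < Rmin h0 del) by (apply Rmin_glb_lt; lra).
   assert (Hh1 : h < h0) by (unfold h; pose proof (Rmin_l h0 del); lra).
   assert (Hh2 : h < del) by (unfold h; pose proof (Rmin_r h0 del); lra).
   assert (Hhp : 0 < h) by (unfold h; lra).
   set (y := fun n => if Nat.eq_dec n m then h else 0).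
   assert (HY : total N y = h).
   { unfold total. rewrite (sumN_single N y m Hm). unfold y; destruct Nat.eq_dec; congruence.
     intros n _ Hn. unfold y; destruct Nat.eq_dec; congruence. }
   assert (HI : ex_RInt p 0 (total N y)) by (apply p_ex_RInt; auto; lra).
   set (pr := ex_RInt_Reals_0 p 0 _ HI).
   set (w := RiemannInt pr - sumN N (fun n => C n (y n))).
   assert (HE : E w).
   { exists y; split. intros n _; unfold y; destruct Nat.eq_dec; lra. exists pr; reflexivity. }
   assert (Hw : 0 < w).
   { unfold w. rewrite <- RInt_Reals, HY.
     rewrite (sumN_single N _ m Hm).
     2:{ intros n Hn Hne. unfold y; destruct Nat.eq_dec; [congruence|].
         destruct (A1 n Hn) as [_ [_ [_ [C0' _]]]]. auto. }
     unfold y; destruct Nat.eq_dec; [|congruence].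
     specialize (Hh h (ltac:(lra))).
     assert ((h - 0) * (p 0 - eps) <= RInt p 0 h).
     { apply RInt_lower; [lra| apply p_ex_RInt; auto; lra|]. intros q Hq. apply Rlt_le, Hd. lra. }
     unfold eps in *. nra. }
   destruct (completeness E) as [s Hs].
   + exists (R0 * p 0). intros z Hz. apply Hb; auto.
   + exists w; auto.
   + exists s. split; auto. destruct Hs as [Hs1 _]. specialize (Hs1 w HE). lra.
Qed.
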